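(* Let $t:[0,1]\to[0,\infty]$ and $s:[0,\infty]\to[0,1]$ be continuous and increasing functions such that the function $G_{t,s}:[0,1]^2\to[0,1]$, $G_{t,s}(x,y)=s(t(x)+t(y))$, is a grouping function. Then: (1) $t(x)=\infty$ if and only if $x=1$; (2) $s(x)=1$ if and only if $x=\infty$.
   Context: ''Increasing'' means non-decreasing. Arithmetic in $[0,\infty]$ uses $c+\infty=\infty$; continuity on $[0,\infty]$ refers to the usual topology of the extended half-line. A grouping function is a map $G:[0,1]^2\to[0,1]$ that is (G1) commutative, (G2) $G(x,y)=0$ iff $x=y=0$, (G3) $G(x,y)=1$ iff $x=1$ or $y=1$, (G4) increasing in each variable, (G5) continuous. *)

(* Defs.v *)
From HB Require Import structures.
From mathcomp Require Import all_boot all_order all_algebra.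
From mathcomp Require Import all_classical all_reals all_analysis.
Set Implicit Arguments. Unset Strict Implicit. Unset Printing Implicit Defensive.
Import Order.TTheory GRing.Theory Num.Theory.
Import numFieldNormedType.Exports.
Local Open Scope classical_set_scope.
Local Open Scope ring_scope.

Definition unit_square (R : realType) : set (R * R) :=
  [set p | (0 <= p.1 <= 1) /\ (0 <= p.2 <= 1)].

(* Grouping function G : [0,1]^2 -> [0,1], represented by a total function
   R -> R -> R whose behaviour is only constrained on [0,1]^2. *)
Definition grouping_function (R : realType) (G : R -> R -> R) : Prop :=
  (forall x y, 0 <= x <= 1 -> 0 <= y <= 1 -> 0 <= G x y <= 1) /\
  (forall x y, 0 <= x <= 1 -> 0 <= y <= 1 -> G x y = G y x) /\
  (forall x y, 0 <= x <= 1 -> 0 <= y <= 1 -> (G x y = 0 <-> (x = 0 /\ y = 0))) /\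
  (forall x y, 0 <= x <= 1 -> 0 <= y <= 1 -> (G x y = 1 <-> (x = 1 \/ y = 1))) /\
  (forall x x' y, 0 <= x <= 1 -> 0 <= x' <= 1 -> 0 <= y <= 1 ->
      x <= x' -> G x y <= G x' y) /\
  (forall x y y', 0 <= x <= 1 -> 0 <= y <= 1 -> 0 <= y' <= 1 ->
      y <= y' -> G x y <= G x y') /\
  {within (@unit_square R), continuous (fun p : R * R => G p.1 p.2)}.

(* Main.v *)
Require Import Defs.
From HB Require Import structures.
From mathcomp Require Import all_boot all_order all_algebra.
From mathcomp Require Import all_classical all_reals all_analysis.
Import Order.TTheory GRing.Theory Num.Theory.
Import numFieldNormedType.Exports.
Local Open Scope classical_set_scope.
Local Open Scope ring_scope.
From mathcomp Require Import lra.
Lemma near1 (R : realType) (t : R -> \bar R)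
  (t_cont : {within [set x : R | 0 <= x <= 1], continuous t})
  (P : \bar R -> Prop) : nbhs (t 1) P -> exists x, 0 <= x < 1 /\ P (t x).
Proof.
move=> Pn.
have := t_cont 1 P Pn.
rewrite /= /nbhs /=. rewrite -nbhs_subspace_in; last by rewrite /= ler01 lexx.
rewrite /within /= => /nbhs_ballP [e /= e0 He].
pose x := 1 - Num.min (e / 2) (1 / 2).
have hm0 : 0 < Num.min (e / 2) (1 / 2) by rewrite lt_min !divr_gt0.
have hm1 : Num.min (e / 2) (1 / 2) <= 1 / 2 by rewrite ge_min lexx orbT.
have hme : Num.min (e / 2) (1 / 2) <= e / 2 by rewrite ge_min lexx.
exists x; split.
  rewrite /x subr_ge0 ltrBlDr ltrDl hm0 andbT.
  by apply: (le_trans hm1); lra.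
apply: He.
  rewrite /ball /= /x opprB addrC subrK ger0_norm ?(ltW hm0) //.
  by apply: (le_lt_trans hme); lra.
rewrite /x subr_ge0 gerBl (ltW hm0) andbT.
by apply: (le_trans hm1); lra.
Qed.

Theorem theorem6p1 (R : realType) (t : R -> \bar R) (s : \bar R -> R)
  (t_range : forall x : R, 0 <= x <= 1 -> (0 <= t x)%E)
  (t_cont : {within [set x : R | 0 <= x <= 1], continuous t})
  (t_incr : forall x y : R, 0 <= x <= 1 -> 0 <= y <= 1 -> x <= y -> (t x <= t y)%E)
  (s_range : forall u : \bar R, (0 <= u)%E -> 0 <= s u <= 1)
  (s_cont : {within [set u : \bar R | (0 <= u)%E], continuous s})
  (s_incr : forall u v : \bar R, (0 <= u)%E -> (0 <= v)%E -> (u <= v)%E -> s u <= s v)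
  (hG : grouping_function (fun x y : R => s (t x + t y)%E)) :
  (forall x : R, 0 <= x <= 1 -> (t x = +oo%E <-> x = 1)) /\
  (forall u : \bar R, (0 <= u)%E -> (s u = 1 <-> u = +oo%E)).
Proof.
case: hG => Grange [Gcomm [G0 [G1 [Gincl [Gincr Gcont]]]]].
have i0 : 0 <= (0:R) <= 1 by apply/andP; split; lra.
have i1 : 0 <= (1:R) <= 1 by apply/andP; split; lra.
have i2 : 0 <= (1/2:R) <= 1 by apply/andP; split; lra.
have s00 : s (t 0%R + t 0%R)%E = 0 by apply/(G0 0 0 i0 i0).
have s10 : s (t 1%R + t 0%R)%E = 1 by apply/(G1 1 0 i1 i0); left.
have t0ge := t_range 0 i0.
have t1ge := t_range 1 i1.
have Gx0 : forall x, 0 <= x < 1 -> s (t x + t 0%R)%E < 1.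
  move=> x /andP[x0 x1]; have ix : 0 <= x <= 1 by rewrite x0 ltW.
  have /andP[_ ] := Grange x 0 ix i0; rewrite le_eqVlt => /orP[/eqP|//].
  by move/(G1 x 0 ix i0) => [] h; move: x1; rewrite h ?ltxx //; lra.
have [a ta] : exists a, t 0%R = a%:E.
  case E: (t 0%R) => [a||]; first by exists a.
    exfalso.
    have h1 : (t 1%R != -oo)%E by apply/negP => /eqP h; move: t1ge; rewrite h.
    move: s00 s10; rewrite E (addey h1) addey //.
    by move=> -> /eqP; rewrite eq_sym oner_eq0.
  by move: t0ge; rewrite E.
have t1oo : t 1%R = +oo%E.
  case E: (t 1%R) => [r||]; last by move: t1ge; rewrite E.
    exfalso.
    have hb : (t 0%R <= t (1/2)%R)%E by apply: t_incr => //; lra.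
    have hb1 : (t (1/2)%R <= t 1%R)%E by apply: t_incr => //; lra.
    move: hb hb1; case E2: (t (1/2)%R) => [b||]; rewrite ?E ?ta //= ?lee_fin => ab br.
    have ab' : a < b.
      rewrite lt_neqAle ab andbT; apply/negP => /eqP hab.
      have : s (t (1/2)%R + t 0%R)%E = 0 by rewrite E2 ta -hab -ta.
      by move/(G0 _ _ i2 i0) => [] h _; move: h; lra.
    have [x [/andP[x0 x1] hx]] := @near1 R t t_cont _ (open_ereal_gt' (y:=(r - (b - a))%:E)
         (x:=t 1%R) ltac:(rewrite E lte_fin; lra)).
    have ix : 0 <= x <= 1 by rewrite x0 ltW.
    have hx1 : (t x <= t 1%R)%E by apply: t_incr => //; apply: ltW.
    move: hx hx1; case E3: (t x) => [c||]; rewrite ?E //= lte_fin lee_fin => hc _.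
    have : s (t x + t (1/2)%R)%E = 1.
      apply/le_anti/andP; split; first by case/andP: (Grange _ _ ix i2).
      apply: (@le_trans _ _ (s (t 1%R + t 0%R)%E)); first by rewrite s10.
      apply: s_incr.
      - by rewrite adde_ge0.
      - by apply: adde_ge0; apply: t_range.
      by rewrite E ta E2 E3 lee_fin; lra.
    by move/(G1 _ _ ix i2) => [] h; [move: x1; rewrite h; lra | move: h; lra].
  by move: t1ge; rewrite E.
have soo : s +oo%E = 1 by move: s10; rewrite t1oo ta /=.
split.
  move=> x ix; split; last by move=> ->.
  move=> tx; have : s (t x + t 0%R)%E = 1 by rewrite tx ta /=.
  by move/(G1 x 0 ix i0) => [//|]; lra.
move=> u u0; split; last by move=> ->.
case: u u0 => [c||] //= c0 sc.
exfalso.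
have [x [/andP[x0 x1] hx]] := @near1 R t t_cont _ (open_ereal_gt' (y:=c%:E)
         (x:=t 1%R) ltac:(by rewrite t1oo ltry)).
have hle : s c%:E <= s (t x + t 0%R)%E.
  apply: s_incr => //.
  by apply: adde_ge0 => //; apply: t_range; rewrite x0 ltW.
  by rewrite ta; apply: lee_paddr; [rewrite -ta | apply: ltW].
have := Gx0 x ltac:(by rewrite x0 x1).
by rewrite ltNge -sc hle.
Qed.
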